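(* For every graph $G$, $\mathrm{tn}(G)\le \mathrm{bn}(G)\le 2\,\mathrm{tn}(G)$.
   Context: Two subgraphs $A,B$ of $G$ touch if they share a vertex or some edge of $G$ has one endpoint in $A$ and the other in $B$. A bramble is a set of connected subgraphs of $G$ that pairwise touch; its order is the minimum size of a set of vertices meeting every element (a hitting set); $\mathrm{bn}(G)$ is the maximum order of a bramble in $G$. A tangle is a set $\tau$ of connected subgraphs of $G$ such that for all $A,B,C\in\tau$ there is either a vertex of $G$ in $A\cap B\cap C$, or an edge $e$ of $G$ such that each of $A,B,C$ contains at least one endpoint of $e$. (Every tangle is a bramble.) The order of a tangle is its order as a bramble, and the tangle number $\mathrm{tn}(G)$ is the maximum order of a tangle in $G$. *)

(* Defs.v *)
From mathcomp Require Import all_boot.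
Set Implicit Arguments. Unset Strict Implicit. Unset Printing Implicit Defensive.

(* A connected subgraph is represented by its (nonempty) vertex set
   X; X is the vertex set of a connected subgraph iff the subgraph induced by
   X is connected. *)

Section Graph.
Variables (T : finType) (e : rel T).

Definition induced (X : {set T}) : rel T :=
  [rel u v | [&& e u v, u \in X & v \in X]].

Definition connected_set (X : {set T}) : bool :=
  (X != set0) && [forall x in X, forall y in X, connect (induced X) x y].

Definition touch (A B : {set T}) : bool :=
  (A :&: B != set0) || [exists u in A, exists v in B, e u v].

Definition is_bramble (B : {set {set T}}) : bool :=
  [forall X in B, connected_set X] && [forall X in B, forall Y in B, touch X Y].

Definition is_tangle (tau : {set {set T}}) : bool :=
  [forall X in tau, connected_set X] &&
  [forall A in tau, forall B in tau, forall C in tau,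
     (A :&: B :&: C != set0) ||
     [exists u, exists v, [&& e u v, (u \in A) || (v \in A),
                              (u \in B) || (v \in B) & (u \in C) || (v \in C)]]].

Definition hits (X : {set T}) (B : {set {set T}}) : bool :=
  [forall Y in B, X :&: Y != set0].

(* order = minimum size of a hitting set; [set: T] hits every family of
   nonempty sets, so the default value #|T| is never strictly below the min *)
Definition bramble_order (B : {set {set T}}) : nat :=
  \big[minn/#|T|]_(X : {set T} | hits X B) #|X|.

Definition bn : nat := \max_(B : {set {set T}} | is_bramble B) bramble_order B.
Definition tn : nat := \max_(B : {set {set T}} | is_tangle B) bramble_order B.

End Graph.

(* Main.v *)
Require Import Defs.
From mathcomp Require Import all_boot.
From mathcomp Require Import zify.

Lemma bigmin_le_seq (I : eqType) (r : seq I) (P : pred I) (F : I -> nat) x j :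
  j \in r -> P j -> \big[minn/x]_(i <- r | P i) F i <= F j.
Proof.
elim: r => // i r IH; rewrite inE big_cons => /predU1P[->|jr] Pj.
  by rewrite Pj geq_minl.
by case: (P i); [rewrite geq_min IH ?orbT | exact: IH].
Qed.

Section Proofs.
Variables (T : finType) (e : rel T).
Hypotheses (e_sym : symmetric e) (e_irr : irreflexive e).

Lemma inducedE (X : {set T}) x y :
  induced e X x y = [&& e x y, x \in X & y \in X].
Proof. by []. Qed.

Lemma induced_mono (X Z : {set T}) a b :
  X \subset Z -> connect (induced e X) a b -> connect (induced e Z) a b.
Proof.
move=> sXZ; apply: connect_sub => x y; rewrite inducedE => /and3P[exy xX yX].
apply: connect1; rewrite inducedE exy (subsetP sXZ) // (subsetP sXZ) //.
Qed.

Arguments induced_mono {X Z a b}.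

Lemma induced_last (X : {set T}) a b :
  connect (induced e X) a b -> a \in X -> b \in X.
Proof.
case/connectP=> p; elim: p a => [|c p IH] a /= => [_ -> //|/andP[st pp] eb _].
move: st; rewrite inducedE => /and3P[_ _ cX]; exact: (IH c pp eb cX).
Qed.

Definition beta (S : {set T}) (y0 : T) : {set T} := [set v | connect (induced e (~: S)) y0 v].

Lemma beta_conn (S : {set T}) (y0 : T) : y0 \notin S -> connected_set e (beta S y0).
Proof.
move=> y0S; apply/andP; split.
  by apply/set0Pn; exists y0; rewrite inE connect0.
have key : forall x, x \in beta S y0 -> connect (induced e (beta S y0)) y0 x.
  have gen : forall p z, connect (induced e (~: S)) y0 z ->
      path (induced e (~: S)) z p -> connect (induced e (beta S y0)) z (last z p).
    elim=> [|c p IH] z Cz /=; first by rewrite connect0.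
    case/andP=> st pp.
    have Cc : connect (induced e (~: S)) y0 c by apply: connect_trans Cz (connect1 st).
    apply: connect_trans (IH c Cc pp); apply: connect1.
    move: st; rewrite !inducedE => /and3P[-> _ _].
    by rewrite !inE Cc Cz.
  move=> x; rewrite inE => /connectP[p pp ->]; exact: gen (connect0 _ _) pp.
have symI : connect_sym (induced e (beta S y0)).
  apply: sym_connect_sym => x y; rewrite !inducedE e_sym; by do 2!case: (_ \in _); rewrite ?andbF.
apply/forallP=> x; apply/implyP=> xb; apply/forallP=> y; apply/implyP=> yb.
apply: connect_trans (key y yb); rewrite symI; exact: key.
Qed.

Lemma beta_sub (B : {set {set T}}) (S Y0 : {set T}) (y0 : T) (Y : {set T}) :
  is_bramble e B -> Y0 \in B -> y0 \in Y0 -> Y0 :&: S == set0 ->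
  Y \in B -> Y :&: S == set0 -> Y \subset beta S y0.
Proof.
move=> /andP[/forallP Hc /forallP Ht] Y0B y0Y0 Y0S YB YS.
have sub : forall X : {set T}, X :&: S == set0 -> X \subset ~: S.
  move=> X /eqP XS; apply/subsetP=> x xX; rewrite inE; apply/negP=> xS.
  have : x \in X :&: S by rewrite inE xX xS.
  by rewrite XS inE.
have cc : forall X, X \in B -> forall a b, a \in X -> b \in X -> connect (induced e X) a b.
  move=> X XB a b aX bX; move: (Hc X); rewrite XB /= => /andP[_ /forallP/(_ a)].
  by rewrite aX /= => /forallP/(_ b); rewrite bX.
have toY : forall a, a \in Y -> connect (induced e (~: S)) y0 a -> Y \subset beta S y0.
  move=> a aY Ca; apply/subsetP=> y yY; rewrite inE; apply: connect_trans Ca _.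
  exact: induced_mono (sub _ YS) (cc _ YB _ _ aY yY).
move: (Ht Y0); rewrite Y0B /= => /forallP/(_ Y); rewrite YB /= => /orP[].
  case/set0Pn=> a; rewrite inE => /andP[aY0 aY]; apply: (toY a aY).
  exact: induced_mono (sub _ Y0S) (cc _ Y0B _ _ y0Y0 aY0).
case/existsP=> a /andP[aY0 /existsP[b /andP[bY eab]]]; apply: (toY b bY).
apply: (connect_trans (induced_mono (sub _ Y0S) (cc _ Y0B _ _ y0Y0 aY0))).
apply: connect1; by rewrite inducedE eab (subsetP (sub _ Y0S)) // (subsetP (sub _ YS)).
Qed.

Lemma order_le (B : {set {set T}}) (S : {set T}) : hits S B -> bramble_order B <= #|S|.
Proof. by move=> h; apply: bigmin_le_seq (mem_index_enum S) h. Qed.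

Lemma order_ge (B : {set {set T}}) n :
  n <= #|T| -> (forall S, hits S B -> n <= #|S|) -> n <= bramble_order B.
Proof.
move=> nT H; rewrite /bramble_order; apply: (big_ind (fun x => n <= x)) => //.
by move=> x y hx hy; rewrite leq_min hx hy.
Qed.

Lemma order_leT (B : {set {set T}}) : bramble_order B <= #|T|.
Proof.
rewrite /bramble_order; apply: (big_ind (fun x => x <= #|T|)) => //.
by move=> x y hx _; rewrite geq_min hx.
by move=> i _; exact: max_card.
Qed.

Lemma avoid (B : {set {set T}}) (S : {set T}) : #|S| < bramble_order B ->
  exists2 Y, Y \in B & Y :&: S == set0.
Proof.
move=> lt; have : ~~ hits S B.
  by apply/negP=> h; move: (order_le _ _ h); rewrite leqNgt lt.
case/forallPn=> Y; rewrite negb_imply negbK => /andP[YB YS].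
by exists Y => //; rewrite setIC.
Qed.

Lemma tangle_bramble tau : is_tangle e tau -> is_bramble e tau.
Proof.
case/andP=> Hc /forallP Ht; apply/andP; split=> //.
apply/forallP=> X; apply/implyP=> XB; apply/forallP=> Y; apply/implyP=> YB.
rewrite /touch; move: (Ht X); rewrite XB /= => /forallP/(_ Y); rewrite YB /= => /forallP/(_ Y).
rewrite YB /= -setIA setIid => /orP[->//|/existsP[u /existsP[v]]].
case/and4P=> euv /orP[uX|vX] /orP[uY|vY] _; apply/orP.
- by left; apply/set0Pn; exists u; rewrite inE uX.
- by right; apply/existsP; exists u; rewrite uX; apply/existsP; exists v; rewrite vY.
- by right; apply/existsP; exists v; rewrite vX; apply/existsP; exists u; rewrite uY e_sym.
- by left; apply/set0Pn; exists v; rewrite inE vX.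
Qed.

Lemma avoidU (X S1 S2 : {set T}) : X :&: (S1 :|: S2) == set0 ->
  (X :&: S1 == set0) && (X :&: S2 == set0).
Proof. by rewrite setIUr setU_eq0. Qed.

Lemma notin_of (Y0 S : {set T}) y0 : y0 \in Y0 -> Y0 :&: S == set0 -> y0 \notin S.
Proof.
move=> yY /eqP h; apply/negP=> yS.
have : y0 \in Y0 :&: S by rewrite inE yY yS.
by rewrite h inE.
Qed.

Arguments notin_of {Y0 S y0}.
Arguments beta_sub {B S Y0 y0 Y}.
Arguments induced_last {X a b}.

Lemma main_bn (B : {set {set T}}) : is_bramble e B -> bramble_order B <= 2 * tn e.
Proof.
move=> Bb; have [k0|kpos] := posnP (bramble_order B); first by rewrite k0.
set k := bramble_order B in kpos *.
set m := k.-1 %/ 2.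
set tau := [set X : {set T} | [exists S : {set T}, [exists y0 : T, [exists Y0 in B,
   [&& #|S| <= m, y0 \in Y0, Y0 :&: S == set0 & X == beta S y0]]]]].
have tauP : forall X, X \in tau -> exists (S : {set T}) (y0 : T) (Y0 : {set T}),
    [/\ #|S| <= m, Y0 \in B, y0 \in Y0, Y0 :&: S == set0 & X = beta S y0].
  move=> X; rewrite inE => /existsP[S /existsP[y0 /existsP[Y0 /andP[Y0B /and4P[c1 c2 c3 /eqP c4]]]]].
  by exists S, y0, Y0.
have mk : 2 * m < k by rewrite /m; lia.
have Bt : forall X Y, X \in B -> Y \in B -> touch e X Y.
  move: Bb => /andP[_ /forallP H] X Y XB YB.
  by move: (H X); rewrite XB /= => /forallP/(_ Y); rewrite YB.
have Bc : forall X, X \in B -> connected_set e X.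
  move: Bb => /andP[/forallP H _] X XB.
  by move: (H X); rewrite XB.
have pair : forall (S1 S2 : {set T}), #|S1| <= m -> #|S2| <= m ->
    exists2 X, X \in B & (X :&: S1 == set0) && (X :&: S2 == set0).
  move=> S1 S2 h1 h2.
  have : #|S1 :|: S2| < k.
    apply: leq_ltn_trans (leq_card_setU S1 S2) _; lia.
  by case/avoid=> X XB /avoidU; exists X.
have tt : is_tangle e tau.
  apply/andP; split.
    apply/forallP=> X; apply/implyP=> /tauP[S [y0 [Y0 [_ _ yY YS ->]]]].
    exact: beta_conn (notin_of yY YS).
  apply/forallP=> X1; apply/implyP=> /tauP[S1 [y1 [Y1 [c1 B1 yY1 YS1 ->]]]].
  apply/forallP=> X2; apply/implyP=> /tauP[S2 [y2 [Y2 [c2 B2 yY2 YS2 ->]]]].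
  apply/forallP=> X3; apply/implyP=> /tauP[S3 [y3 [Y3 [c3 B3 yY3 YS3 ->]]]].
  have [X XB /andP[XS1 XS2]] := pair S1 S2 c1 c2.
  have [Y YB /andP[YT2 YT3]] := pair S2 S3 c2 c3.
  have sX1 := beta_sub Bb B1 yY1 YS1 XB XS1.
  have sX2 := beta_sub Bb B2 yY2 YS2 XB XS2.
  have sY2 := beta_sub Bb B2 yY2 YS2 YB YT2.
  have sY3 := beta_sub Bb B3 yY3 YS3 YB YT3.
  case/orP: (Bt X Y XB YB).
    case/set0Pn=> a; rewrite inE => /andP[aX aY].
    apply/orP; left; apply/set0Pn; exists a.
    by rewrite !in_setI (subsetP sX1) // (subsetP sX2) // (subsetP sY3).
  case/existsP=> a /andP[aX /existsP[b /andP[bY eab]]].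
  apply/orP; right; apply/existsP; exists a; apply/existsP; exists b.
  apply/and4P; split => //; apply/orP; [left; exact: (subsetP sX1) | left; exact: (subsetP sX2) | right; exact: (subsetP sY3)].
have ord : m.+1 <= bramble_order tau.
  apply: order_ge.
    apply: leq_trans (order_leT B); rewrite -/k; lia.
  move=> H hH; rewrite ltnNge; apply/negP=> Hm.
  have : #|H| < k by lia.
  case/avoid=> Y0 Y0B Y0H.
  case/andP: (Bc Y0 Y0B) => /set0Pn[y0 yY0] _.
  have bt : beta H y0 \in tau.
    rewrite inE; apply/existsP; exists H; apply/existsP; exists y0; apply/existsP; exists Y0.
    by rewrite Y0B Hm yY0 Y0H eqxx.
  move/forallP: hH => /(_ (beta H y0)); rewrite bt /= => /set0Pn[v].
  rewrite !inE => /andP[vH Cv].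
  have := induced_last Cv; rewrite inE (notin_of yY0 Y0H) => /(_ isT).
  by rewrite inE vH.
have : bramble_order tau <= tn e by apply: leq_bigmax_cond.
lia.
Qed.

End Proofs.

Theorem lemma10 (T : finType) (e : rel T)
  (e_sym : symmetric e) (e_irr : irreflexive e) :
  tn e <= bn e <= 2 * tn e.
Proof.
apply/andP; split.
  apply/bigmax_leqP => tau tt.
  by apply: leq_bigmax_cond; apply: tangle_bramble.
by apply/bigmax_leqP => B Bb; apply: main_bn.
Qed.
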